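(* In a finite dynamic game as described in the context, suppose $K^i$ is unilaterally sufficient information for player $i$, and let $j\neq i$ be another player. Then for every behavioral strategy profile $g$, every $t$, every $h_t^i\in\mathcal{H}_t^i$ with compression $k_t^i$, and every $h_t^j\in\mathcal{H}_t^j$, $$\Pr^g(h_t^i\mid h_t^j)=\Pr^g(h_t^i\mid k_t^i)\,\Pr^g(k_t^i\mid h_t^j),$$ whenever $\Pr^g(k_t^i)>0$ and $\Pr^g(h_t^j)>0$.
   Context: Game model: finite set of players $\mathcal{I}$, times $\mathcal{T}=\{1,\dots,T\}$. At time $t$ each player $i$ takes action $U_t^i\in\mathcal{U}_t^i$, obtains reward $R_t^i\in[-1,1]$ and learns new information $Z_t^i\in\mathcal{Z}_t^i$. There is a state $X_t\in\mathcal{X}_t$ with $(X_{t+1},Z_t,R_t)=f_t(X_t,U_t,W_t)$ for fixed functions $f_t$. Primitive random variables $(X_1,H_1)$ and $W_1,\dots,W_T$ are mutually independent with commonly known distributions. All sets are finite. Perfect recall: $H_t^i=(H_1^i,Z_{1:t-1}^i)\in\mathcal{H}_t^i$, and $U_t^i$ is a component of $Z_t^i$. Behavioral strategy $g_t^i:\mathcal{H}_t^i\to\Delta(\mathcal{U}_t^i)$. A realization is admissible under $g$ if it has positive probability under $g$. Compression: $K_1^i=\iota_1^i(H_1^i)$, $K_t^i=\iota_t^i(K_{t-1}^i,Z_{t-1}^i)$ for fixed maps, finite value sets $\mathcal{K}_t^i$; $k_t^i$ is the compression of $h_t^i$. Unilaterally sufficient information (USI): $K^i$ is USI for player $i$ if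 there exist $F_t^{i,g^i}:\mathcal{K}_t^i\to\Delta(\mathcal{H}_t^i)$ depending only on $g^i$ and $\Phi_t^{i,g^{-i}}:\mathcal{K}_t^i\to\Delta(\mathcal{X}_t\times\mathcal{H}_t^{-i})$ depending only on $g^{-i}$ with $\Pr^g(x_t,h_t\mid k_t^i)=F_t^{i,g^i}(h_t^i\mid k_t^i)\Phi_t^{i,g^{-i}}(x_t,h_t^{-i}\mid k_t^i)$ for all behavioral profiles $g$, all $t$, all $k_t^i$ admissible under $g$ (with $x_t,h_t^i,h_t^{-i}$ ranging independently; the left side is $0$ if they disagree on shared components). *)

(* Defs.v *)
From HB Require Import structures.
From mathcomp Require Import all_boot all_order all_algebra.
Set Implicit Arguments. Unset Strict Implicit. Unset Printing Implicit Defensive.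
Import Order.TTheory GRing.Theory Num.Theory.
Local Open Scope ring_scope.

Definition is_distr (R : realFieldType) (T : finType) (p : T -> R) :=
  (forall x, 0 <= p x) /\ \sum_(x : T) p x = 1.

Section Game.
Variable R : realFieldType.
Variable I : finType.
Variable X : nat -> finType.
Variable U : nat -> I -> finType.
Variable Y : nat -> I -> finType.           (* non-action part of Z_t^i *)
Variable H1 : I -> finType.
Variable W : nat -> finType.

(* New information Z_t^i = (U_t^i, Y_t^i): the own action is a component. *)
Definition Z t i : finType := Finite.clone (U t i * Y t i)%type _.

(* Perfect recall: H_{t+1}^i = (H_t^i, Z_t^i), i.e. H_t^i = (H_1^i, Z_{1:t-1}^i). *)
Fixpoint Hist (i : I) (t : nat) : finType :=
  match t with
  | 0 => H1 i
  | t'.+1 => Finite.clone (Hist i t' * Z t' i)%type _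
  end.

Definition JU t : finType := Finite.clone {dffun forall i : I, U t i} _.
Definition JY t : finType := Finite.clone {dffun forall i : I, Y t i} _.
Definition JH t : finType := Finite.clone {dffun forall i : I, Hist i t} _.

Definition strategy (i : I) := forall t, Hist i t -> U t i -> R.
Definition profile := forall i : I, strategy i.
Definition is_strategy (i : I) (gi : strategy i) :=
  forall t (h : Hist i t), is_distr (gi t h).
Definition is_profile (g : profile) := forall i, is_strategy (g i).

Definition prevH t (h : JH t.+1) : JH t := [ffun i => (h i).1].
Definition actH t (h : JH t.+1) : JU t := [ffun i => (h i).2.1].
Definition obsH t (h : JH t.+1) : JY t := [ffun i => (h i).2.2].

(* dynamics (X_{t+1}, Z_t) = f_t(X_t, U_t, W_t) (rewards omitted) *)
Variable f : forall t, X t -> JU t -> W t -> (X t.+1 * JY t)%type.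
(* law of (X_1, H_1) and of W_t, mutually independent *)
Variable P0 : X 0%N -> JH 0%N -> R.
Variable PW : forall t, W t -> R.

Fixpoint Pjoint (g : profile) (t : nat) : X t -> JH t -> R :=
  match t with
  | 0 => P0
  | t'.+1 => fun x h =>
      \sum_(x0 : X t') \sum_(w : W t')
        Pjoint g x0 (prevH h)
        * (\prod_(i : I) g i t' (h i).1 (h i).2.1)
        * PW w
        * ((f x0 (actH h) w == (x, obsH h)) %:R)
  end.

Definition PrE (g : profile) t (E : X t -> JH t -> bool) : R :=
  \sum_(x : X t) \sum_(h : JH t) (E x h)%:R * Pjoint g x h.

Definition condPr (g : profile) t (A B : X t -> JH t -> bool) : R :=
  PrE g (fun x h => A x h && B x h) / PrE g B.

Section Compression.
Variable i0 : I.
Variable K : nat -> finType.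
Variable iota1 : H1 i0 -> K 0%N.
Variable iota : forall t, K t -> Z t i0 -> K t.+1.

Fixpoint compress (t : nat) : Hist i0 t -> K t :=
  match t with
  | 0 => iota1
  | t'.+1 => fun h => iota (compress h.1) h.2
  end.

Definition OHist t : finType :=
  Finite.clone {dffun forall j : {j : I | j != i0}, Hist (val j) t} _.
Definition restrH t (h : JH t) : OHist t := finfun (fun j => h (val j)).

(* Unilaterally sufficient information for player i0 (times 0 .. T-1). *)
Definition USI (T : nat) : Prop :=
  exists (F : strategy i0 -> forall t, K t -> Hist i0 t -> R)
         (Phi : profile -> forall t, K t -> X t -> OHist t -> R),
    (forall gi, is_strategy gi -> forall t (k : K t), is_distr (F gi t k)) /\
    (forall g, is_profile g -> forall t (k : K t),
        is_distr (fun p : (X t * OHist t)%type => Phi g t k p.1 p.2)) /\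
    (forall g g', (forall j, j != i0 -> forall t h u, g j t h u = g' j t h u) ->
        forall t k x o, Phi g t k x o = Phi g' t k x o) /\
    (forall g, is_profile g -> forall t, (t < T)%N -> forall k : K t,
        0 < PrE g (fun _ h => compress (h i0) == k) ->
        forall (x : X t) (h : JH t),
          condPr g (fun x' h' => (x' == x) && (h' == h))
                   (fun _ h' => compress (h' i0) == k)
          = F (g i0) t k (h i0) * Phi g t k x (restrH h)).
End Compression.
End Game.

(* Main.v *)
Require Import Defs.
From HB Require Import structures.
From mathcomp Require Import all_boot all_order all_algebra.
From mathcomp Require Import ring.
Import Order.TTheory GRing.Theory Num.Theory.
Local Open Scope ring_scope.
Set Implicit Arguments.

Section Upd.
Variables (I : finType) (T : I -> finType) (i : I).
Definition upd (h : {dffun forall l, T l}) (a : T i) : {dffun forall l, T l} :=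
  finfun (dfwith (fun l => h l) a).
Lemma upd_i h a : upd h a i = a.
Proof. by rewrite /upd ffunE dfwith_in. Qed.
Lemma upd_o h a l : i != l -> upd h a l = h l.
Proof. by move=> hl; rewrite /upd ffunE dfwith_out. Qed.
Lemma upd_upd h a b : upd (upd h a) b = upd h b.
Proof. apply/ffunP => l; rewrite /upd !ffunE; case: (eqVneq i l) => [<-|hl].
  by rewrite !dfwith_in.
by rewrite !dfwith_out // ffunE dfwith_out. Qed.
Lemma upd_id h : upd h (h i) = h.
Proof. apply/ffunP => l; rewrite /upd !ffunE; case: (eqVneq i l) => [<-|hl].
  by rewrite !dfwith_in.
by rewrite !dfwith_out. Qed.
End Upd.

Lemma psum (R : realFieldType) (A B : finType) (F : A -> B -> R) :
  \sum_x \sum_y F x y = \sum_(p : A * B) F p.1 p.2.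
Proof. exact: pair_bigA. Qed.

Lemma prod_sum (R : realFieldType) (A B : finType) (a b : A -> B -> R) :
  (\sum_x \sum_y a x y) * (\sum_x \sum_y b x y) =
  \sum_(p : (A * B) * (A * B)) a p.1.1 p.1.2 * b p.2.1 p.2.2.
Proof.
rewrite (@psum _ _ _ a) (@psum _ _ _ b) mulr_suml.
under eq_bigr do rewrite mulr_sumr.
by rewrite (@psum _ _ _ (fun p q => a p.1 p.2 * b q.1 q.2)).
Qed.

Unset Implicit Arguments.
Theorem lemma7
  (R : realFieldType) (I : finType) (T : nat)
  (X : nat -> finType) (U Y : nat -> I -> finType) (H1 : I -> finType)
  (W : nat -> finType)
  (f : forall t, X t -> JU U t -> W t -> (X t.+1 * JY Y t)%type)
  (P0 : X 0%N -> JH U Y H1 0%N -> R) (PW : forall t, W t -> R)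
  (hP0 : is_distr (fun p : (X 0%N * JH U Y H1 0%N)%type => P0 p.1 p.2))
  (hPW : forall t, is_distr (PW t))
  (i : I) (K : nat -> finType) (iota1 : H1 i -> K 0%N)
  (iota : forall t, K t -> Z U Y t i -> K t.+1)
  (husi : USI f P0 PW iota1 iota T)
  (j : I) (hji : j != i)
  (g : profile R U Y H1) (hg : is_profile g)
  (t : nat) (ht : (t < T)%N)
  (hi : Hist U Y H1 i t) (hj : Hist U Y H1 j t) :
  0 < PrE f P0 PW g (fun _ h => compress iota1 iota (h i) == compress iota1 iota hi) ->
  0 < PrE f P0 PW g (fun _ h => h j == hj) ->
  condPr f P0 PW g (fun _ h => h i == hi) (fun _ h => h j == hj)
  = condPr f P0 PW g (fun _ h => h i == hi)
                     (fun _ h => compress iota1 iota (h i) == compress iota1 iota hi)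
    * condPr f P0 PW g (fun _ h => compress iota1 iota (h i) == compress iota1 iota hi)
                       (fun _ h => h j == hj).
Proof.
move=> PC PB.
case: husi => F [Phi [_ [_ [_ Husi]]]].
set k := compress iota1 iota hi.
set C := (fun (_ : X t) (h : JH U Y H1 t) => compress iota1 iota (h i) == k) in PC *.
have HQ : forall x h, condPr f P0 PW g (fun x' h' => (x' == x) && (h' == h)) C
   = F (g i) t k (h i) * Phi g t k x (restrH i h) := Husi g hg t ht k PC.
set P := PrE f P0 PW g.
have PC0 : P t C != 0 by rewrite gt_eqF.
have PB0 : P t (fun _ h => h j == hj) != 0 by rewrite gt_eqF.
have sing : forall x h, P t (fun x' h' => ((x' == x) && (h' == h)) && C x' h')
     = (C x h)%:R * Pjoint f P0 PW g x h.
  move=> x h; rewrite /P /PrE (bigD1 x) //= [X in _ + X]big1 ?addr0; last first.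
    move=> y hy0; have hy : (y == x) = false by apply/negbTE.
    by apply: big1 => h' _; rewrite hy /= mul0r.
  rewrite eqxx /= (@bigD1 _ _ _ (JH U Y H1 t) h) //= [X in _ + X]big1 ?addr0; last first.
    move=> h' hh0; have hh : (h' == h) = false by apply/negbTE.
    by rewrite hh /= mul0r.
  by rewrite eqxx.
have key : forall E : X t -> JH U Y H1 t -> bool,
  P t (fun x h => E x h && C x h) = P t C *
    \sum_x \sum_h (E x h)%:R * (F (g i) t k (h i) * Phi g t k x (restrH i h)).
  move=> E; set c := P t C; rewrite mulr_sumr /P /PrE; apply: eq_bigr => x _.
  rewrite mulr_sumr; apply: eq_bigr => h _.
  rewrite -HQ /condPr -/P sing -mulnb natrM.
  by rewrite -/c; field.
set Q := fun x (h : JH U Y H1 t) => F (g i) t k (h i) * Phi g t k x (restrH i h).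
set S := fun E : X t -> JH U Y H1 t -> bool => \sum_x \sum_h (E x h)%:R * Q x h.
have keyS : forall E, P t (fun x h => E x h && C x h) = P t C * S E by exact: key.
have S1 : S (fun _ _ => true) = 1.
  apply: (mulfI PC0); rewrite -keyS mulr1 /=.
  reflexivity.
have SAB : S (fun _ h => (h i == hi) && (h j == hj)) =
           S (fun _ h => h i == hi) * S (fun _ h => h j == hj).
  have sw : S (fun _ h => (h i == hi) && (h j == hj)) * S (fun _ _ => true) =
           S (fun _ h => h i == hi) * S (fun _ h => h j == hj).
    pose updH := @upd I (fun l => Hist U Y H1 l t) i.
    have rU : forall (h : JH U Y H1 t) a, restrH i (@upd I (fun l => Hist U Y H1 l t) i h a) = restrH i h.
      move=> h a; apply/ffunP => l; rewrite /restrH !ffunE dfwith_out //.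
      by rewrite eq_sym; apply: (valP l).
    pose tau := fun p : (X t * JH U Y H1 t) * (X t * JH U Y H1 t) =>
      ((p.2.1, (updH p.2.2 (p.1.2 i) : JH U Y H1 t)),
       (p.1.1, (updH p.1.2 (p.2.2 i) : JH U Y H1 t))).
    have tauK : involutive tau.
      case=> [[x h] [x' h']]; rewrite /tau /= /updH !upd_i !upd_upd !upd_id //.
    rewrite /S !prod_sum [RHS](reindex_inj (inv_inj tauK)).
    apply: eq_bigr => [[[x h] [x' h']]] _; rewrite /tau /Q /= /updH !upd_i.
    rewrite upd_o; last by rewrite eq_sym. rewrite !rU -mulnb natrM.
    ring.
  by rewrite S1 mulr1 in sw.
have eAB : P t (fun _ h => (h i == hi) && (h j == hj)) =
           P t (fun x h => (h i == hi) && (h j == hj) && C x h).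
  rewrite /P /PrE; apply: eq_bigr => x _; apply: eq_bigr => h _.
  case hA: (h i == hi) => //=; move/eqP: hA => hA.
  by rewrite /C /k hA eqxx andbT.
have eCB : P t (fun x h => C x h && (h j == hj)) =
           P t (fun x h => (h j == hj) && C x h).
  by rewrite /P /PrE; apply: eq_bigr => x _; apply: eq_bigr => h _; rewrite andbC.
rewrite /condPr -/P eAB eCB !keyS SAB.
have fld : forall c a b d : R, c != 0 -> c * (a * b) / d = c * a / c * (c * b / d).
  by move=> c a b d hc; rewrite [c * a / c]mulrAC divff // mul1r; ring.
exact: fld.
Qed.
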